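(* Let $(\Phi,\{\Gamma_x\}_{x\in D},D)$ be a labeled compact information algebra, let $x\in D$, $\psi\in\Gamma_x$ and $\phi\in\Phi_x$. Then $\psi\ll_x\phi$ if and only if $\psi\le\phi$.
   Context: A labeled information algebra $(\Phi,D)$ consists of a lattice $D$, a set $\Phi$ with a labeling $d:\Phi\to D$, a combination $\otimes:\Phi\times\Phi\to\Phi$ and a marginalization $(\phi,x)\mapsto\phi^{\downarrow x}$ defined for $x\le d(\phi)$, such that: $\otimes$ is associative and commutative; for each $s\in D$ there is $e_s$ with $d(e_s)=s$ and $e_s\otimes\phi=\phi$ whenever $d(\phi)=s$; $d(\phi\otimes\psi)=d(\phi)\vee d(\psi)$; $d(\phi^{\downarrow x})=x$; $(\phi^{\downarrow y})^{\downarrow x}=\phi^{\downarrow x}$ for $x\le y\le d(\phi)$; $(\phi\otimes\psi)^{\downarrow x}=\phi\otimes\psi^{\downarrow x\wedge y}$ when $d(\phi)=x$, $d(\psi)=y$; $e_y^{\downarrow x}=e_x$ for $x\le y$; $\phi\otimes\phi^{\downarrow x}=\phi$ for $x\le d(\phi)$. Let $\Phi_x=\{\phi:d(\phi)=x\}$, order $\psi\le\phi$ iff $\psi\otimes\phi=\phi$, and let $\ll_x$ be the way-below relation of the poset $(\Phi_x,\le)$ ($a\ll_x b$ iff for every directed $X\subseteq\Phi_x$ with $b\le\vee X$ there is $c\in X$ with $a\le c$). A labeled compact information algebra $(\Phi,\{\Gamma_x\}_{x\in D},D)$ is a labeled information algebra with $D$ having a top element $\top$, together with, for each $x\in D$,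 a set $\Gamma_x\subseteq\Phi_x$ closed under combination and containing $e_x$, such that: (convergency) every directed $X\subseteq\Gamma_x$ has a supremum $\vee X$ and $\vee X\in\Phi_x$; (density) $\phi=\vee\{\psi\in\Gamma_x:\psi\ll_x\phi\}$ for all $\phi\in\Phi_x$; (compactness) for every directed $X\subseteq\Gamma_x$ and $\phi\in\Gamma_x$ with $\phi\le\vee X$ there is $\psi\in X$ with $\phi\le\psi$. *)

(* Defs.v *)
From HB Require Import structures.
From mathcomp Require Import all_boot all_order.
Set Implicit Arguments. Unset Strict Implicit. Unset Printing Implicit Defensive.
Import Order.TTheory.
Local Open Scope order_scope.

(* Labeled information algebra over a lattice D.  Marginalization is given as a
   total function [marg], whose axioms are only imposed for x <= d(phi). *)
Record labeled_info_algebra (disp : Order.disp_t) (D : latticeType disp)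
    (Phi : Type) := LabeledInfoAlgebra {
  lab  : Phi -> D;
  comb : Phi -> Phi -> Phi;
  marg : Phi -> D -> Phi;
  neut : D -> Phi;
  comb_assoc : forall a b c, comb a (comb b c) = comb (comb a b) c;
  comb_comm  : forall a b, comb a b = comb b a;
  lab_neut   : forall s, lab (neut s) = s;
  neutral    : forall s phi, lab phi = s -> comb (neut s) phi = phi;
  lab_comb   : forall phi psi, lab (comb phi psi) = lab phi `|` lab psi;
  lab_marg   : forall phi x, x <= lab phi -> lab (marg phi x) = x;
  marg_trans : forall phi x y, x <= y -> y <= lab phi ->
                 marg (marg phi y) x = marg phi x;
  combination : forall phi psi x y, lab phi = x -> lab psi = y ->
                 marg (comb phi psi) x = comb phi (marg psi (x `&` y));
  marg_neut  : forall x y, x <= y -> marg (neut y) x = neut x;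
  idempotency : forall phi x, x <= lab phi -> comb phi (marg phi x) = phi
}.

Section Order.
Context (disp : Order.disp_t) (D : latticeType disp) (Phi : Type)
        (A : labeled_info_algebra D Phi).

Definition ile (psi phi : Phi) : Prop := comb A psi phi = phi.

Definition sub_lab (x : D) (X : Phi -> Prop) : Prop :=
  forall a, X a -> lab A a = x.

Definition directed (X : Phi -> Prop) : Prop :=
  (exists a, X a) /\
  (forall a b, X a -> X b -> exists c, X c /\ ile a c /\ ile b c).

Definition is_sup (x : D) (X : Phi -> Prop) (s : Phi) : Prop :=
  lab A s = x /\ (forall a, X a -> ile a s) /\
  (forall b, lab A b = x -> (forall a, X a -> ile a b) -> ile s b).

Definition way_below (x : D) (a b : Phi) : Prop :=
  forall X, sub_lab x X -> directed X ->
  forall s, is_sup x X s -> ile b s -> exists c, X c /\ ile a c.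

(* the additional structure of a labeled compact information algebra
   (D is required to have a top element by taking D : tLatticeType below) *)
Record compact_axioms (Gamma : D -> Phi -> Prop) : Prop := {
  Gamma_lab   : forall x, sub_lab x (Gamma x);
  Gamma_comb  : forall x a b, Gamma x a -> Gamma x b -> Gamma x (comb A a b);
  Gamma_neut  : forall x, Gamma x (neut A x);
  convergency : forall x X, sub_lab x X -> (forall a, X a -> Gamma x a) ->
                  directed X -> exists s, is_sup x X s;
  density     : forall x phi, lab A phi = x ->
                  is_sup x (fun psi => Gamma x psi /\ way_below x psi phi) phi;
  compactness : forall x X phi, (forall a, X a -> Gamma x a) -> directed X ->
                  Gamma x phi -> forall s, is_sup x X s -> ile phi s ->
                  exists psi, X psi /\ ile phi psi
}.
End Order.

(* Main.v *)
Require Import Defs.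
From mathcomp Require Import all_boot all_order.

Section Aux.
Context (disp : Order.disp_t) (D : latticeType disp) (Phi : Type)
        (A : labeled_info_algebra D Phi).

Lemma ile_trans a b c : ile A a b -> ile A b c -> ile A a c.
Proof.
unfold ile; intros H1 H2.
rewrite <- H2, comb_assoc, H1; reflexivity.
Qed.

Lemma marg_self phi : marg A phi (lab A phi) = phi.
Proof.
pose proof (@combination _ _ _ A phi (neut A (lab A phi)) _ _ erefl (lab_neut A _)) as H.
rewrite Order.MeetTheory.meetxx marg_neut in H; last exact: Order.POrderTheory.lexx.
rewrite (comb_comm A phi (neut A _)) (@neutral _ _ _ A _ _ erefl) in H.
exact H.
Qed.

Lemma ile_refl phi : ile A phi phi.
Proof.
unfold ile. have H := @idempotency _ _ _ A phi (lab A phi) (Order.POrderTheory.lexx _).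
rewrite marg_self in H; exact H.
Qed.

Lemma wb_le x a b : lab A b = x -> way_below A x a b -> ile A a b.
Proof.
intros Hb W.
destruct (W (fun c => c = b)) with (s := b) as [c [-> Hc]]; auto.
- intros c ->; auto.
- split; [exists b; auto|]. intros a0 b0 -> ->. exists b; split; auto; split; apply ile_refl.
- split; auto. split; [intros a0 ->; apply ile_refl|]. intros b0 _ H; apply H; auto.
- apply ile_refl.
Qed.

Lemma wb_mono x a b b' : way_below A x a b -> ile A b b' -> way_below A x a b'.
Proof.
intros W H X HX HD s Hs Hb. apply (W X HX HD s Hs). unfold ile in *; rewrite <- Hb, comb_assoc, H; reflexivity.
Qed.
End Aux.
Arguments ile_trans {disp D Phi A a b c}.
Arguments ile_refl {disp D Phi} A phi.
Arguments wb_le {disp D Phi A x a b}.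
Arguments wb_mono {disp D Phi A x a b b'}.

Theorem lemma4p3 (disp : Order.disp_t) (D : tLatticeType disp) (Phi : Type)
  (A : labeled_info_algebra D Phi) (Gamma : D -> Phi -> Prop)
  (HC : compact_axioms A Gamma) (x : D) (psi phi : Phi) :
  Gamma x psi -> lab A phi = x ->
  (way_below A x psi phi <-> ile A psi phi).
Proof.
intros Gpsi Lphi. split.
- apply wb_le; auto.
- intros Hle X HX [[c0 Xc0] HD] s Hs Hphis.
  set Y := fun g => Gamma x g /\ exists c, X c /\ way_below A x g c.
  assert (YG : forall a, Y a -> Gamma x a) by (intros a [? _]; auto).
  assert (YL : sub_lab A x Y) by (intros a Ya; apply (Gamma_lab HC); apply YG; auto).
  assert (neut_le : forall b, lab A b = x -> ile A (neut A x) b)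
    by (intros b Hb; unfold ile; apply neutral; auto).
  assert (YD : directed A Y).
  { split.
    - exists (neut A x). split; [apply (Gamma_neut HC)|]. exists c0; split; auto.
      intros Z HZ HDZ t Ht _. destruct HDZ as [[z Zz] _]. exists z; split; auto.
    - intros g1 g2 [G1 [c1 [X1 W1]]] [G2 [c2 [X2 W2]]].
      destruct (HD c1 c2 X1 X2) as [c3 [X3 [H13 H23]]].
      assert (W1' := wb_mono W1 H13). assert (W2' := wb_mono W2 H23).
      exists (comb A g1 g2). split; [split; [apply (Gamma_comb HC); auto|]|].
      + exists c3; split; auto.
        intros Z HZ HDZ t Ht Hct.
        destruct (W1' Z HZ HDZ t Ht Hct) as [z1 [Z1 I1]].
        destruct (W2' Z HZ HDZ t Ht Hct) as [z2 [Z2 I2]].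
        destruct (proj2 HDZ z1 z2 Z1 Z2) as [z3 [Z3 [J1 J2]]].
        exists z3; split; auto. unfold ile.
        rewrite <- comb_assoc. rewrite (ile_trans I2 J2). exact (ile_trans I1 J1).
      + split; unfold ile.
        * rewrite comb_assoc (ile_refl A g1); reflexivity.
        * rewrite comb_assoc (comb_comm A g2 g1) -comb_assoc (ile_refl A g2); reflexivity.
  }
  destruct (convergency HC YL YG YD) as [t Ht].
  assert (Hst : ile A s t).
  { destruct Hs as [Ls [Us Lubs]]. apply Lubs; [apply Ht|].
    intros c Xc. destruct (density HC (HX c Xc)) as [_ [_ Lc]].
    apply Lc; [apply Ht|]. intros g [Gg Wg]. apply (proj1 (proj2 Ht)).
    split; auto. exists c; auto. }
  destruct (compactness HC YG YD Gpsi Ht (ile_trans (ile_trans Hle Hphis) Hst))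
    as [g [[Gg [c [Xc Wc]]] Hg]].
  exists c; split; auto. apply (ile_trans Hg). apply (wb_le (HX c Xc) Wc).
Qed.
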